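(* Let $\mathcal{A}=\mathbb{C}[x,y]$ and consider the complex $0\to\mathcal{A}\xrightarrow{d^0}\mathcal{A}\times\mathcal{A}\xrightarrow{d^1}\mathcal{A}\to0$ with $d^0(f)=(x\partial_yf,\,-x^2\partial_xf)$ and $d^1(f_1,f_2)=x\partial_yf_2+x^2\partial_xf_1-xf_1$ (the logarithmic Poisson complex of the bracket $\{x,y\}=x^2$ along $x^2\mathcal{A}$). Its cohomology satisfies $H^0_{PS}\cong\mathbb{C}$, $H^1_{PS}\cong\mathbb{C}[y]\oplus\mathbb{C}_1[x]$, $H^2_{PS}\cong\mathbb{C}[y]$, where $\mathbb{C}_1[x]=\{a_0+a_1x:\ a_0,a_1\in\mathbb{C}\}$. *)

(* Defs.v *)
From HB Require Import structures.
From mathcomp Require Import all_boot all_order all_algebra.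
Set Implicit Arguments. Unset Strict Implicit. Unset Printing Implicit Defensive.
Import Order.TTheory GRing.Theory Num.Theory.
Local Open Scope ring_scope.

(* The polynomial ring A = F[x,y] is represented as {poly {poly F}}:
   polynomials in the (outer) variable y whose coefficients are polynomials
   in the (inner) variable x. *)
Definition bipoly (F : fieldType) := {poly {poly F}}.

Definition xA (F : fieldType) : {poly {poly F}} := ('X : {poly F})%:P.

Definition dX (F : fieldType) (p : {poly {poly F}}) : {poly {poly F}} :=
  map_poly (@deriv _) p.
Definition dY (F : fieldType) (p : {poly {poly F}}) : {poly {poly F}} :=
  deriv p.

Definition scA (F : fieldType) (c : F) (p : {poly {poly F}}) : {poly {poly F}} :=
  c%:P%:P * p.
Definition scAA (F : fieldType) (c : F) (u : {poly {poly F}} * {poly {poly F}}) :=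
  (scA c u.1, scA c u.2).
Definition scPP (F : fieldType) (c : F) (u : {poly F} * {poly F}) :=
  (c *: u.1, c *: u.2).

Definition d0 (F : fieldType) (f : {poly {poly F}}) :=
  (xA F * dY f, - (xA F ^+ 2 * dX f)).
Definition d1 (F : fieldType) (u : {poly {poly F}} * {poly {poly F}}) :
  {poly {poly F}} :=
  xA F * dY u.2 + xA F ^+ 2 * dX u.1 - xA F * u.1.

(* [quot_iso sV sW Z B T]: the quotient Z / B (Z, B subspaces of V, B inside Z)
   is F-linearly isomorphic to the subspace T of W; expressed via the first
   isomorphism theorem: there is an F-linear map Z -> W with image exactly T
   and kernel exactly B. *)
Definition quot_iso (F : fieldType) (V W : zmodType)
  (sV : F -> V -> V) (sW : F -> W -> W)
  (Z B : V -> Prop) (T : W -> Prop) : Prop :=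
  exists phi : V -> W,
    [/\ (forall u v, Z u -> Z v -> phi (u + v) = phi u + phi v),
        (forall c u, Z u -> phi (sV c u) = sW c (phi u)),
        (forall u, Z u -> T (phi u)),
        (forall w, T w -> exists u, Z u /\ phi u = w) &
        (forall u, Z u -> (phi u = 0 <-> B u))].

(* Main.v *)
Require Import Defs.
From HB Require Import structures.
From mathcomp Require Import all_boot all_order all_algebra.
Import GRing.Theory.
Local Open Scope ring_scope.

Section Gen.
Variable R : unitRingType.
Hypothesis hu : forall n : nat, (n.+1%:R : R) \is a GRing.unit.

Lemma deriv_eq0C (p : {poly R}) : p^`() = 0 -> p = (p`_0)%:P.
Proof.
move=> H; apply/polyP => j; rewrite coefC; case: j => [//|j] /=.
have := congr1 (fun q : {poly R} => q`_j) H.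
rewrite coef_deriv coef0 -mulr_natr => /(congr1 (fun z => z * (j.+1%:R)^-1)).
by rewrite -mulrA mulrV // mulr1 mul0r.
Qed.

Definition prim (q : {poly R}) : {poly R} :=
  \poly_(i < (size q).+1) (q`_i.-1 * (i%:R)^-1).

Lemma prim_deriv q : (prim q)^`() = q.
Proof.
apply/polyP => j; rewrite coef_deriv coef_poly ltnS.
case: ltnP => Hj /=.
  by rewrite -[_ *+ _]mulr_natr -mulrA mulVr ?mulr1.
by rewrite mul0rn nth_default.
Qed.

Lemma prim0 q : (prim q)`_0 = 0.
Proof. by rewrite coef_poly /= invr0 mulr0. Qed.
End Gen.

Section Main.
Variable F : fieldType.
Hypothesis hF : [pchar F] =i pred0.

Lemma unitF n : (n.+1%:R : F) \is a GRing.unit.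
Proof. by rewrite unitfE; move/pcharf0P: hF => ->. Qed.

Lemma unitPF n : (n.+1%:R : {poly F}) \is a GRing.unit.
Proof.
by rewrite poly_unitE -polyC_natr size_polyC coefC /= unitF andbT; move/pcharf0P: hF => ->.
Qed.

Lemma xA_neq0 : xA F != 0.
Proof. by rewrite /xA polyC_eq0 polyX_eq0. Qed.

Lemma coef_xA (p : {poly {poly F}}) j : (xA F * p)`_j = 'X * p`_j.
Proof. by rewrite /xA coefCM. Qed.

Lemma coef_xA2 (p : {poly {poly F}}) j : (xA F ^+ 2 * p)`_j = 'X^2 * p`_j.
Proof. by rewrite /xA -rmorphXn coefCM. Qed.

Lemma coef_dX (p : {poly {poly F}}) j : (dX p)`_j = (p`_j)^`().
Proof. by rewrite /dX coef_map_id0 // deriv0. Qed.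

Definition ev0 (p : {poly {poly F}}) : {poly F} := map_poly (fun c : {poly F} => c`_0) p.

Lemma coef_ev0 p j : (ev0 p)`_j = (p`_j)`_0.
Proof. by rewrite /ev0 coef_map_id0 // coef0. Qed.

Lemma drop1K (c : {poly F}) : c`_0 = 0 -> 'X * drop_poly 1 c = c.
Proof.
move=> H; apply/polyP => i; rewrite coefXM coef_drop_poly.
by case: i => [|i] //=; rewrite addn1.
Qed.

Lemma ev0_dec (p : {poly {poly F}}) : ev0 p = 0 ->
  p = xA F * map_poly (drop_poly 1) p.
Proof.
move=> H; apply/polyP => j; rewrite coef_xA coef_map_id0 ?drop_poly0r //.
rewrite drop1K //; by rewrite -coef_ev0 H coef0.
Qed.

Lemma ev0_xA p : ev0 (xA F * p) = 0.
Proof. by apply/polyP => j; rewrite coef_ev0 coef_xA coefXM coef0. Qed.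

Lemma dY_xA2 (p : {poly {poly F}}) : dY (xA F ^+ 2 * p) = xA F ^+ 2 * dY p.
Proof. by apply/polyP => j; rewrite /dY coef_deriv !coef_xA2 coef_deriv mulrnAr. Qed.

Lemma dY_dX (p : {poly {poly F}}) : dY (dX p) = dX (dY p).
Proof. by apply/polyP => j; rewrite /dY coef_deriv !coef_dX coef_deriv derivMn. Qed.

Lemma dX_xA (p : {poly {poly F}}) : dX (xA F * p) = p + xA F * dX p.
Proof.
apply/polyP => j; rewrite coef_dX coefD !coef_xA coef_dX derivM derivX mul1r.
done.
Qed.

Lemma dYC (c : {poly F}) : dY c%:P = 0.
Proof. exact: derivC. Qed.

Lemma dXC (c : F) : dX (c%:P%:P) = 0.
Proof. by rewrite /dX map_polyC /= derivC. Qed.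

Lemma ker0 (f : {poly {poly F}}) : d0 f = 0 -> f = ((f`_0)`_0)%:P%:P.
Proof.
move=> Hf.
have H1 : xA F * dY f = 0 by have := congr1 fst Hf.
have H2 : xA F ^+ 2 * dX f = 0.
  by apply/eqP; rewrite -oppr_eq0; apply/eqP; have := congr1 snd Hf.
move: H1 H2 => /eqP H1 /eqP H2.
rewrite mulf_eq0 (negbTE xA_neq0) /= in H1.
rewrite mulf_eq0 expf_eq0 (negbTE xA_neq0) andbF /= in H2.
move/eqP: H1 => H1; move/eqP: H2 => H2.
have -> := @deriv_eq0C _ unitPF _ H1.
have := congr1 (fun q : {poly {poly F}} => q`_0) H2; rewrite coef_dX coef0 => H3.
rewrite {1}(@deriv_eq0C _ unitF _ H3). by rewrite coefC.
Qed.

Lemma dXB (p q : {poly {poly F}}) : dX (p - q) = dX p - dX q.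
Proof. by apply/polyP=> j; rewrite coefB !coef_dX coefB derivB. Qed.

Lemma dXPC (h : {poly F}) : dX h%:P = (h^`())%:P.
Proof. by rewrite /dX map_polyC. Qed.

Lemma xA2C (s : {poly F}) : xA F ^+ 2 * s%:P = ('X^2 * s)%:P.
Proof. by rewrite /xA -rmorphXn -polyCM. Qed.

Lemma dYD (p q : {poly {poly F}}) : dY (p + q) = dY p + dY q.
Proof. exact: derivD. Qed.

Lemma part1 : quot_iso (@scA F) (fun c (a : F) => c * a)
    (fun f => d0 f = 0) (fun f => f = 0) (fun _ => True).
Proof.
exists (fun f : {poly {poly F}} => (f`_0)`_0); split.
- by move=> u v _ _; rewrite !coefD.
- by move=> c u _; rewrite /scA !coefCM.
- by [].
- move=> w _; exists w%:P%:P; split; last by rewrite !coefC.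
  by rewrite /d0 dXC /dY derivC !mulr0 oppr0.
- move=> f Hf; split => H.
    by rewrite (ker0 _ Hf) H !polyC0.
  by rewrite H !coef0.
Qed.

Lemma part3 : quot_iso (@scA F) (fun c (p : {poly F}) => c *: p)
    (fun _ => True) (fun g => exists u, g = d1 u) (fun _ => True).
Proof.
exists ev0; split.
- by move=> u v _ _; apply/polyP=> j; rewrite coefD !coef_ev0 !coefD.
- by move=> c u _; apply/polyP=> j; rewrite coefZ !coef_ev0 /scA !coefCM.
- by [].
- move=> w _; exists (map_poly polyC w); split => //.
  by apply/polyP=> j; rewrite coef_ev0 coef_map_id0 ?polyC0 // coefC.
- move=> g _; split.
  + move=> H; rewrite (ev0_dec _ H).
    exists (0, prim _ (map_poly (drop_poly 1) g)).
    by rewrite /d1 /= /dY (@prim_deriv _ unitPF) /dX map_poly0 !mulr0 subr0 addr0.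
  + move=> [u ->].
    have -> : d1 u = xA F * (dY u.2 + xA F * dX u.1 - u.1)
      by rewrite /d1 mulrBr mulrDr expr2 mulrA.
    exact: ev0_xA.
Qed.

Lemma part2 : quot_iso (@scAA F) (@scPP F)
    (fun u => d1 u = 0) (fun u => exists f, u = d0 f)
    (fun w => (size w.2 <= 2)%N).
Proof.
exists (fun u : {poly {poly F}} * {poly {poly F}} => (ev0 u.1, take_poly 2 (u.2`_0))); split.
- move=> [u1 u2] [v1 v2] _ _ /=.
  rewrite coefD take_polyD; congr (_, _).
  by apply/polyP=> j; rewrite coefD !coef_ev0 !coefD.
- move=> c [u1 u2] _ /=; rewrite /scPP /=; congr (_, _).
    by apply/polyP=> j; rewrite coefZ !coef_ev0 /scA !coefCM.
  by rewrite /scA coefCM mul_polyC take_polyZ.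
- by move=> u _; exact: size_take_poly.
- move=> [c g] /= Hg.
  pose P := prim _ (map_poly polyC c : {poly {poly F}}).
  exists (map_poly polyC c, P + g%:P); split.
    rewrite /d1 /=.
    have -> : dX (map_poly polyC c : {poly {poly F}}) = 0.
      by apply/polyP=> j; rewrite coef_dX coef_map_id0 ?polyC0 // derivC coef0.
    by rewrite /dY derivD (@prim_deriv _ unitPF) derivC addr0 mulr0 addr0 subrr.
  congr (_, _).
    by apply/polyP=> j; rewrite coef_ev0 coef_map_id0 ?polyC0 // coefC.
  by rewrite coefD prim0 coefC add0r take_poly_id.
- move=> u Hd1; split.
  + case: u Hd1 => u1 u2 /= Hd1 H.
    have H1 : ev0 u1 = 0 by have := congr1 fst H.
    have H2 : take_poly 2 u2`_0 = 0 by have := congr1 snd H.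
    move: (map_poly (drop_poly 1) u1) (ev0_dec _ H1) => Q EQ1.
    move: (prim _ Q) (@prim_deriv _ unitPF Q) (@prim0 _ Q) => P dP P0.
    have E : dY u2 + xA F ^+ 2 * dX Q = 0.
      have : xA F * (dY u2 + xA F * dX u1 - u1) = 0.
        by rewrite -Hd1 /d1 mulrBr mulrDr expr2 mulrA.
      move/eqP; rewrite mulf_eq0 (negbTE xA_neq0) /= => /eqP.
      rewrite EQ1 dX_xA mulrDr expr2 mulrA => HH; rewrite -{}HH.
      by rewrite [in RHS]addrCA [RHS]addrC addKr.
    have dr : dY (u2 + xA F ^+ 2 * dX P) = 0.
      rewrite dYD dY_xA2 dY_dX /dY dP; exact: E.
    have Er : u2 + xA F ^+ 2 * dX P = (u2`_0)%:P.
      rewrite {1}(@deriv_eq0C _ unitPF _ dr).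
      by rewrite coefD coef_xA2 coef_dX P0 deriv0 mulr0 addr0.
    have Eg : u2`_0 = 'X^2 * drop_poly 2 (u2`_0).
      by rewrite mulrC -{1}(poly_take_drop 2 (u2`_0)) H2 add0r.
    move: (prim _ (drop_poly 2 (u2`_0))) (@prim_deriv _ unitF (drop_poly 2 u2`_0)) => h dh.
    exists (P - h%:P); rewrite /d0; congr (_, _).
      by rewrite EQ1 /dY derivB derivC subr0 dP.
    rewrite dXB dXPC dh mulrBr opprB xA2C -Eg -Er.
    by rewrite addrK.
  + move=> [f ->] /=.
    rewrite ev0_xA.
    have -> : take_poly 2 (- (xA F ^+ 2 * dX f))`_0 = 0.
      apply/polyP=> i; rewrite coef_take_poly !coefN coef_xA2 coefXnM coef0.
      by case: ifP => // ->; rewrite oppr0.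
    by [].
Qed.

End Main.

Theorem proposition3p2 (F : fieldType) (hF : [pchar F] =i pred0) :
  (* H^0 = ker d0  ~=  F *)
  quot_iso (@scA F) (fun c (a : F) => c * a)
    (fun f => d0 f = 0) (fun f => f = 0) (fun _ => True)
  /\
  (* H^1 = ker d1 / im d0  ~=  F[y] (+) F_1[x] *)
  quot_iso (@scAA F) (@scPP F)
    (fun u => d1 u = 0) (fun u => exists f, u = d0 f)
    (fun w => (size w.2 <= 2)%N)
  /\
  (* H^2 = A / im d1  ~=  F[y] *)
  quot_iso (@scA F) (fun c (p : {poly F}) => c *: p)
    (fun _ => True) (fun g => exists u, g = d1 u) (fun _ => True).
Proof.
split; [exact: part1 | split; [exact: part2 | exact: part3]].
Qed.
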